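(* Let $D,E$ be $\mathcal{G}$-spaces and $L>0$. The mapping which takes $(\psi,x_1,x_2)\in\mathcal{G}(L,\ell_1+\ell_2)\times D(\ell_1)\times E(\ell_2)$ to the equivalence class of $(\psi_2\otimes\psi_1,x_2,x_1)$ in $(E\otimes D)(L)$, where $\psi=\psi_1\otimes\psi_2$ is the unique decomposition with $\psi_i\in\mathcal{G}(\ell'_i,\ell_i)$ and $\ell'_1+\ell'_2=L$, induces a continuous map $B:(D\otimes E)(L)\to(E\otimes D)(L)$ which is a homeomorphism. This family of homeomorphisms is not natural with respect to $L>0$.
   Context: $\mathcal{G}$ is the category whose objects are the real numbers $\ell>0$, with $\mathcal{G}(\ell_1,\ell_2)$ the set of nondecreasing homeomorphisms $[0,\ell_1]\to[0,\ell_2]$, equipped with the compact-open topology, composition given by composition of maps. For $\phi_i:[0,\ell_i]\to[0,\ell'_i]$, $\phi_1\otimes\phi_2:[0,\ell_1+\ell_2]\to[0,\ell'_1+\ell'_2]$ is $\phi_1(t)$ for $0\le t\le\ell_1$ and $\phi_2(t-\ell_1)+\ell'_1$ for $\ell_1\le t\le\ell_1+\ell_2$. Every $\psi\in\mathcal{G}(L,\ell_1+\ell_2)$ decomposes uniquely as $\psi_1\otimes\psi_2$ as described. All spaces are ($\Delta$-generated) topological spaces. A $\mathcal{G}$-space is an enriched (continuous) functor $D:\mathcal{G}^{op}\to\mathbf{Top}$; write $x\phi=D(\phi)(x)$. The tensor product $D\otimes E=\int^{(\ell_1,\ell_2)}\mathcal{G}(-,\ell_1+\ell_2)\times D(\ell_1)\times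 E(\ell_2)$; concretely $(D\otimes E)(L)$ is the quotient of $\bigsqcup_{(\ell_1,\ell_2)}\mathcal{G}(L,\ell_1+\ell_2)\times D(\ell_1)\times E(\ell_2)$ by the identifications $(\psi,x_1\phi_1,x_2\phi_2)\sim((\phi_1\otimes\phi_2)\psi,x_1,x_2)$, and a map $\omega:L'\to L$ acts by $(\psi,x_1,x_2)\mapsto(\psi\omega,x_1,x_2)$. Naturality in $L$ would mean compatibility of $B$ with these actions of $\mathcal{G}$ on $D\otimes E$ and $E\otimes D$. *)

(* Defs.v *)
From HB Require Import structures.
From mathcomp Require Import all_boot all_order all_algebra.
From mathcomp Require Import all_classical all_reals all_analysis.
From Stdlib Require Import Relations.Relation_Operators.
Set Implicit Arguments. Unset Strict Implicit. Unset Printing Implicit Defensive.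
Import Order.TTheory GRing.Theory Num.Theory.
Import numFieldTopology.Exports.
Local Open Scope classical_set_scope.
Local Open Scope ring_scope.

Definition cont (A B : Type) (oA : set (set A)) (oB : set (set B)) (f : A -> B) :=
  forall U, oB U -> oA (f @^-1` U).

Definition homeo (A B : Type) (oA : set (set A)) (oB : set (set B)) (f : A -> B) :=
  exists g : B -> A, cancel f g /\ cancel g f /\ cont oA oB f /\ cont oB oA g.

Definition gen_top (T : Type) (S : set (set T)) : set (set T) :=
  fun A => forall x, A x -> exists n (F : 'I_n -> set T),
    (forall i, S (F i)) /\ (forall i, F i x) /\ (forall y, (forall i, F i y) -> A y).

Section Delta.
Variable R : realType.

Definition simplex (n : nat) : set 'rV[R]_n.+1 :=
  [set x | (forall i, 0 <= x ord0 i) /\ \sum_i x ord0 i = 1].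

(* sigma : Delta^n -> X is continuous for the subspace topology on Delta^n *)
Definition simplex_cont (X : Type) (tau : set (set X)) (n : nat)
    (sigma : 'rV[R]_n.+1 -> X) :=
  forall U, tau U -> exists V : set 'rV[R]_n.+1,
    open V /\ (forall x, simplex x -> (U (sigma x) <-> V x)).

(* Delta-ification: the final topology w.r.t. all continuous maps from simplices *)
Definition deltaify (X : Type) (tau : set (set X)) : set (set X) :=
  fun U => forall n (sigma : 'rV[R]_n.+1 -> X), simplex_cont tau sigma ->
    exists V : set 'rV[R]_n.+1, open V /\ (forall x, simplex x -> (U (sigma x) <-> V x)).

Definition delta_generated (X : topologicalType) :=
  deltaify (@open X) = @open X.

(* A morphism l1 -> l2 (nondecreasing homeomorphism [0,l1] -> [0,l2]) *)
(* is represented by a function R -> R, normalised so that it is      *)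
(* determined by its values on [0,l1] (f t = f (clamp t)).            *)

Definition clampR (a t : R) : R := Num.min a (Num.max 0 t).

Definition isGmor (a b : R) (f : R -> R) : Prop :=
  (forall t, f t = f (clampR a t)) /\
  (forall t, 0 <= t <= a -> 0 <= f t <= b) /\
  (forall s t, 0 <= s <= a -> 0 <= t <= a -> s <= t -> f s <= f t) /\
  {within [set t | 0 <= t <= a], continuous f} /\
  exists g : R -> R,
    (forall u, 0 <= u <= b -> 0 <= g u <= a) /\
    (forall t, 0 <= t <= a -> g (f t) = t) /\
    (forall u, 0 <= u <= b -> f (g u) = u) /\
    {within [set u | 0 <= u <= b], continuous g}.

Definition Gm (a b : R) := {f : R -> R | isGmor a b f}.

Definition co_subbasis (a b : R) : set (set (Gm a b)) :=
  [set S | exists (K V : set R), compact K /\ K `<=` [set t | 0 <= t <= a] /\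
     open V /\ S = [set f : Gm a b | forall t, K t -> (V `&` [set u | 0 <= u <= b]) (sval f t)]].

Definition Gtop (a b : R) : set (set (Gm a b)) := deltaify (gen_top (@co_subbasis a b)).

(* tensor: phi1 (x) phi2 with phi1 : [0,l1] -> [0,l1'] *)
Definition tens (l1 l1' : R) (f g : R -> R) (t : R) : R :=
  if t <= l1 then f t else g (t - l1) + l1'.

(* products (in Delta-generated spaces: Delta-ification of the product topology) *)
Definition prod2_top (A B : Type) (oA : set (set A)) (oB : set (set B)) : set (set (A * B)) :=
  deltaify (gen_top [set S | (exists U, oA U /\ S = [set p | U p.1]) \/
                             (exists U, oB U /\ S = [set p | U p.2])]).

Definition prod3_top (A B C : Type) (oA : set (set A)) (oB : set (set B)) (oC : set (set C))
  : set (set (A * B * C)) :=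
  deltaify (gen_top [set S | (exists U, oA U /\ S = [set p | U p.1.1]) \/
                             (exists U, oB U /\ S = [set p | U p.1.2]) \/
                             (exists U, oC U /\ S = [set p | U p.2])]).

(* G-spaces: continuous functors G^op -> Top (Delta-generated)          *)
Record GSpace := {
  gsp : {posnum R} -> topologicalType;
  gact : forall l1 l2 : {posnum R}, gsp l2 -> Gm l1%:num l2%:num -> gsp l1;
  gsp_delta : forall l, delta_generated (gsp l);
  gact_id : forall (l : {posnum R}) (x : gsp l) (chi : Gm l%:num l%:num),
    (forall t, 0 <= t <= l%:num -> sval chi t = t) -> gact x chi = x;
  gact_comp : forall (l1 l2 l3 : {posnum R}) (x : gsp l3)
    (phi : Gm l2%:num l3%:num) (psi : Gm l1%:num l2%:num) (chi : Gm l1%:num l3%:num),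
    (forall t, sval chi t = sval phi (sval psi t)) ->
    gact x chi = gact (gact x phi) psi;
  gact_cont : forall l1 l2 : {posnum R},
    cont (prod2_top (@open (gsp l2)) (@Gtop l1%:num l2%:num)) (@open (gsp l1))
         (fun p => gact p.1 p.2)
}.

Definition fib (D E : GSpace) (L : {posnum R}) (l : {posnum R} * {posnum R}) :=
  (Gm L%:num (l.1%:num + l.2%:num) * gsp D l.1 * gsp E l.2)%type.

Definition Raw (D E : GSpace) (L : {posnum R}) := {l : {posnum R} * {posnum R} & fib D E L l}.

Definition mkRaw (D E : GSpace) (L l1 l2 : {posnum R})
  (psi : Gm L%:num (l1%:num + l2%:num)) (x1 : gsp D l1) (x2 : gsp E l2) : Raw D E L :=
  existT (fib D E L) (l1, l2) (psi, x1, x2).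

Inductive cstep (D E : GSpace) (L : {posnum R}) : Raw D E L -> Raw D E L -> Prop :=
| CStep (m1 m2 l1 l2 : {posnum R}) (phi1 : Gm m1%:num l1%:num) (phi2 : Gm m2%:num l2%:num)
    (psi : Gm L%:num (m1%:num + m2%:num)) (psi' : Gm L%:num (l1%:num + l2%:num))
    (x1 : gsp D l1) (x2 : gsp E l2) :
    (forall t, sval psi' t = tens m1%:num l1%:num (sval phi1) (sval phi2) (sval psi t)) ->
    cstep (mkRaw psi (gact x1 phi1) (gact x2 phi2)) (mkRaw psi' x1 x2).

Definition ceqv (D E : GSpace) (L : {posnum R}) : Raw D E L -> Raw D E L -> Prop :=
  Relation_Operators.clos_refl_sym_trans _ (@cstep D E L).

Definition quot (T : Type) (r : T -> T -> Prop) := {S : set T | exists x, S = r x}.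
Definition qproj (T : Type) (r : T -> T -> Prop) (x : T) : quot r :=
  exist _ (r x) (ex_intro _ x erefl).

Definition TensG (D E : GSpace) (L : {posnum R}) := quot (@ceqv D E L).
Definition tproj (D E : GSpace) (L : {posnum R}) (r : Raw D E L) : TensG D E L :=
  qproj (@ceqv D E L) r.

(* topology: coproduct over (l1,l2) of the Delta-products, then quotient *)
Definition raw_top (D E : GSpace) (L : {posnum R}) : set (set (Raw D E L)) :=
  fun U => forall l : {posnum R} * {posnum R},
    prod3_top (@Gtop L%:num (l.1%:num + l.2%:num)) (@open (gsp D l.1)) (@open (gsp E l.2))
      [set p | U (existT (fib D E L) l p)].

Definition tens_top (D E : GSpace) (L : {posnum R}) : set (set (TensG D E L)) :=
  fun U => raw_top (@tproj D E L @^-1` U).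

Definition induced_by_swap (D E : GSpace) (L : {posnum R})
    (B : TensG D E L -> TensG E D L) :=
  forall (l1 l2 m1 m2 : {posnum R}) (psi : Gm L%:num (l1%:num + l2%:num))
    (x1 : gsp D l1) (x2 : gsp E l2) (psi1 psi2 : R -> R)
    (psi' : Gm L%:num (l2%:num + l1%:num)),
    m1%:num + m2%:num = L%:num ->
    isGmor m1%:num l1%:num psi1 -> isGmor m2%:num l2%:num psi2 ->
    (forall t, sval psi t = tens m1%:num l1%:num psi1 psi2 t) ->
    (forall t, sval psi' t = tens m2%:num l2%:num psi2 psi1 t) ->
    B (tproj (mkRaw psi x1 x2)) = tproj (mkRaw psi' x2 x1).

(* the action of omega : L' -> L, (D (x) E)(L) -> (D (x) E)(L'), as a relation
   q |-> q' ; (psi, x1, x2) |-> (psi omega, x1, x2) *)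
Definition tens_act (D E : GSpace) (L L' : {posnum R}) (omega : Gm L'%:num L%:num)
    (q : TensG D E L) (q' : TensG D E L') :=
  exists (l1 l2 : {posnum R}) (psi : Gm L%:num (l1%:num + l2%:num))
    (psi' : Gm L'%:num (l1%:num + l2%:num)) (x1 : gsp D l1) (x2 : gsp E l2),
    (forall t, sval psi' t = sval psi (sval omega t)) /\
    q = tproj (mkRaw psi x1 x2) /\ q' = tproj (mkRaw psi' x1 x2).

Definition natural_swap (D E : GSpace)
    (B : forall L : {posnum R}, TensG D E L -> TensG E D L) :=
  forall (L L' : {posnum R}) (omega : Gm L'%:num L%:num) (q : TensG D E L) (q' : TensG D E L'),
    tens_act omega q q' -> tens_act omega (B L q) (B L' q').

End Delta.

(* Main.v *)
Require Import Defs.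
From HB Require Import structures.
From mathcomp Require Import all_boot all_order all_algebra.
From mathcomp Require Import all_classical all_reals all_analysis.
From mathcomp Require Import ring lra.
From Stdlib Require Import Relations.Relation_Operators.
Set Implicit Arguments. Unset Strict Implicit. Unset Printing Implicit Defensive.
Import Order.TTheory GRing.Theory Num.Theory.
Import numFieldTopology.Exports.
Local Open Scope classical_set_scope.
Local Open Scope ring_scope.

Section A.
Variable R : realType.
Implicit Types (a b t s u : R).

Definition gc (f : R -> R) (x : R) :=
  forall e : R, 0 < e -> exists2 d : R, 0 < d & forall y, `|y - x| < d -> `|f y - f x| < e.

Lemma gc_cont f x : gc f x -> {for x, continuous f}.
Proof.
move=> H; apply/cvgrPdist_lt => e e0.
have [d d0 Hd] := H e e0.
apply/nbhs_ballP; exists d => //= y hy; move: hy; rewrite /ball /= => hy.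
by rewrite distrC Hd // distrC.
Qed.

Lemma within_gc (A : set R) f : (forall x, A x -> gc f x) -> {within A, continuous f}.
Proof.
move=> H; apply: continuous_in_subspaceT => x; rewrite inE => Ax.
exact: gc_cont (H x Ax).
Qed.

Lemma gc_within (A : set R) (f : R -> R) : {within A, continuous f} -> forall x, A x ->
  forall e : R, 0 < e -> exists2 d : R, 0 < d & forall y, A y -> `|y - x| < d -> `|f y - f x| < e.
Proof.
move=> /subspace_continuousP H x Ax e e0.
have := H x Ax; move/cvgrPdist_lt => /(_ e e0).
rewrite near_withinE => /nbhs_ballP [d /= d0 Hd].
exists d => // y Ay hy.
rewrite distrC; apply: Hd => //; rewrite -ball_normE /= distrC //.
Qed.

End A.

Section B.
Variable R : realType.
Implicit Types (a b t s u x y : R).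

Lemma clampE a t : 0 <= a -> clampR a t = if t <= 0 then 0 else if t <= a then t else a.
Proof.
move=> a0; rewrite /clampR.
case: ifP => t0.
  rewrite (_ : Num.max 0 t = 0); last by apply/max_idPl.
  by apply/min_idPr.
case: ifP => ta.
  rewrite (_ : Num.max 0 t = t); last by apply/max_idPr; lra.
  by apply/min_idPr.
rewrite (_ : Num.max 0 t = t); last by apply/max_idPr; lra.
by apply/min_idPl; lra.
Qed.

Lemma clamp_in a t : 0 <= a -> 0 <= clampR a t <= a.
Proof. move=> a0; rewrite clampE //; case: ifP => ?; [|case: ifP => ?]; apply/andP; split; lra. Qed.

Lemma clamp_id a t : 0 <= t <= a -> clampR a t = t.
Proof. move=> /andP[t0 ta]; rewrite clampE; last lra. case: ifP => ?; [lra|]. by rewrite ta. Qed.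

Lemma clamp_idem a t : 0 <= a -> clampR a (clampR a t) = clampR a t.
Proof. move=> a0; apply: clamp_id; exact: clamp_in. Qed.

Lemma clamp_ml a x y : 0 <= a -> x <= y -> 0 <= clampR a y - clampR a x <= y - x.
Proof.
move=> a0 xy; rewrite !clampE //.
case: (lerP y 0) => y0; case: (lerP x 0) => x0;
 try (case: (lerP y a) => ya); try (case: (lerP x a) => xa); apply/andP; split; lra.
Qed.

Lemma clamp_lip a x y : 0 <= a -> `|clampR a y - clampR a x| <= `|y - x|.
Proof.
move=> a0; case: (lerP x y) => xy.
  have /andP[h1 h2] := clamp_ml a0 xy.
  by rewrite !ger0_norm //; lra.
have /andP[h1 h2] := clamp_ml a0 (ltW xy).
rewrite (distrC (clampR a y)); try rewrite (distrC y); rewrite ?ger0_norm //; lra.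
Qed.

End B.

Section C.
Variable R : realType.
Implicit Types (a b t s u x y : R) (f g : R -> R).

Definition I01 a := [set t : R | 0 <= t <= a].

Lemma gc_clamp a f : 0 <= a -> {within [set t | 0 <= t <= a], continuous f} ->
  forall x, gc (f \o clampR a) x.
Proof.
move=> a0 H x e e0.
have [d d0 Hd] := gc_within H (clamp_in x a0) e0.
exists d => // y hy /=; apply: Hd; first exact: clamp_in.
exact: le_lt_trans (clamp_lip _ _ a0) hy.
Qed.

Section GmF.
Variables (a b : R) (f : R -> R).
Hypothesis a0 : 0 < a.
Hypothesis Hf : isGmor a b f.

Lemma Gm_clamp t : f t = f (clampR a t).
Proof. by case: Hf. Qed.

Lemma Gm_range_in t : 0 <= t <= a -> 0 <= f t <= b.
Proof. by case: Hf => _ [H _]; apply: H. Qed.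

Lemma Gm_range t : 0 <= f t <= b.
Proof. rewrite Gm_clamp; apply: Gm_range_in; apply: clamp_in; exact: ltW. Qed.

Lemma Gm_mono s t : 0 <= s <= a -> 0 <= t <= a -> s <= t -> f s <= f t.
Proof. by case: Hf => _ [_ [H _]]; apply: H. Qed.

Lemma Gm_gc x : gc f x.
Proof.
case: Hf => Hc [_ [_ [Hw _]]].
have := gc_clamp (ltW a0) Hw x.
have -> // : f \o clampR a = f by apply: funext => t /=; rewrite -Hc.
Qed.

Lemma Gm_inv : exists G : R -> R,
  [/\ forall u, 0 <= G u <= a, forall t, 0 <= t <= a -> G (f t) = t,
      forall u, 0 <= u <= b -> f (G u) = u & forall x, gc G x].
Proof.
case: Hf => Hc [Hr [Hm [Hw [g [g1 [g2 [g3 g4]]]]]]].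
have h00 : (0:R) <= 0 <= a by rewrite lexx ltW.
have b0 : 0 <= b by have /andP[? ?] := Hr 0 h00; lra.
exists (g \o clampR b); split => /=.
- by move=> u; apply: g1; exact: clamp_in.
- by move=> t ht; rewrite clamp_id ?g2 //; exact: Hr.
- by move=> u hu; rewrite clamp_id // g3.
- exact: gc_clamp.
Qed.

Lemma Gm_inj s t : 0 <= s <= a -> 0 <= t <= a -> f s = f t -> s = t.
Proof.
move=> hs ht e; have [G [_ G2 _ _]] := Gm_inv.
by rewrite -(G2 s hs) -(G2 t ht) e.
Qed.

Lemma Gm_lt s t : 0 <= s <= a -> 0 <= t <= a -> s < t -> f s < f t.
Proof.
move=> hs ht st; rewrite lt_neqAle Gm_mono ?(ltW st) // andbT.
apply/eqP => e; have := Gm_inj hs ht e; lra.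
Qed.

Lemma Gm_0 : f 0 = 0.
Proof.
have [G [G1 _ G3 _]] := Gm_inv.
have b0 : 0 <= b by have /andP[? ?] := Gm_range 0; lra.
have h0 : (0:R) <= 0 <= b by rewrite lexx b0.
have e := G3 0 h0.
have h00 : (0:R) <= 0 <= a by rewrite lexx ltW.
have := Gm_mono h00 (G1 0); have /andP[? ?] := G1 0 => /(_ ltac:(done)).
rewrite e; have /andP[? ?] := Gm_range 0; lra.
Qed.

Lemma Gm_a : f a = b.
Proof.
have [G [G1 _ G3 _]] := Gm_inv.
have b0 : 0 <= b by have /andP[? ?] := Gm_range 0; lra.
have hb : 0 <= b <= b by rewrite lexx b0.
have e := G3 b hb.
have haa : 0 <= a <= a by rewrite lexx ltW.
have := Gm_mono (G1 b) haa; have /andP[? ?] := G1 b => /(_ ltac:(done)).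
rewrite e; have /andP[? ?] := Gm_range a; lra.
Qed.

End GmF.
End C.

Section D.
Variable R : realType.
Implicit Types (a b t s u x y : R) (f g : R -> R).

Lemma nlt (z e : R) : `|z| < e -> -e < z /\ z < e.
Proof. by rewrite ltr_norml => /andP. Qed.
Lemma ltn (z e : R) : -e < z -> z < e -> `|z| < e.
Proof. by move=> h1 h2; rewrite ltr_norml h1 h2. Qed.
Lemma nle (z e : R) : `|z| <= e -> -e <= z /\ z <= e.
Proof. by rewrite ler_norml => /andP. Qed.

Lemma min_pos (d1 d2 : R) : 0 < d1 -> 0 < d2 -> exists d : R, [/\ 0 < d, d <= d1 & d <= d2].
Proof.
move=> h1 h2; case: (lerP d1 d2) => h.
  by exists d1; split => //; lra.
by exists d2; split => //; lra.
Qed.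

Lemma isGmor_intro a b F Gi : 0 < a ->
  (forall t, F t = F (clampR a t)) ->
  (forall t, 0 <= t <= a -> 0 <= F t <= b) ->
  (forall s t, 0 <= s <= a -> 0 <= t <= a -> s <= t -> F s <= F t) ->
  (forall x, 0 <= x <= a -> gc F x) ->
  (forall u, 0 <= u <= b -> 0 <= Gi u <= a) ->
  (forall t, 0 <= t <= a -> Gi (F t) = t) ->
  (forall u, 0 <= u <= b -> F (Gi u) = u) ->
  (forall u, 0 <= u <= b -> gc Gi u) -> isGmor a b F.
Proof.
move=> a0 h1 h2 h3 h4 h5 h6 h7 h8.
split => //; split => //; split => //; split; first exact: within_gc.
by exists Gi; split => //; split => //; split => //; apply: within_gc.
Qed.

Lemma gc_cs h p c d x : 0 <= p -> (forall y, gc h y) ->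
  gc (fun u => h (clampR p u + c) - d) x.
Proof.
move=> p0 H e e0; have [del d0 Hd] := H (clampR p x + c) e e0.
exists del => // y hy.
rewrite (_ : h (clampR p y + c) - d - (h (clampR p x + c) - d) =
   h (clampR p y + c) - h (clampR p x + c)); last by ring.
apply: Hd; rewrite (_ : clampR p y + c - (clampR p x + c) = clampR p y - clampR p x); last by ring.
exact: le_lt_trans (clamp_lip _ _ p0) hy.
Qed.

Definition ext (L l : R) (f : R -> R) (s : R) := if s <= L then f s else f (s - L) + l.

Definition GMP L l f :=
  [/\ forall s, 0 <= s <= L -> 0 <= f s <= l,
      forall s t, 0 <= s <= L -> 0 <= t <= L -> s <= t -> f s <= f t,
      f 0 = 0, f L = l & forall x, gc f x].

Lemma ext_gc L l f : 0 < L -> GMP L l f -> forall x, gc (ext L l f) x.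
Proof.
move=> L0 [_ _ f0 fL fg] x e e0; rewrite /ext.
case: (ltgtP x L) => xL.
- have [d1 d10 H1] := fg x e e0.
  have [d [d0 dd1 dd2]] := min_pos d10 (ltac:(lra) : 0 < L - x).
  exists d => // y /nlt [hy1 hy2].
  have -> : y <= L by lra.
  by apply: H1; apply: ltn; lra.
- have [d1 d10 H1] := fg (x - L) e e0.
  have [d [d0 dd1 dd2]] := min_pos d10 (ltac:(lra) : 0 < x - L).
  exists d => // y /nlt [hy1 hy2].
  have -> : (y <= L) = false by apply/negbTE; rewrite -ltNge; lra.
  rewrite (_ : f (y - L) + l - (f (x - L) + l) = f (y - L) - f (x - L)); last by ring.
  by apply: H1; apply: ltn; lra.
- subst x; have [d1 d10 H1] := fg L e e0.
  have [d2 d20 H2] := fg 0 e e0.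
  have [d [d0 dd1 dd2]] := min_pos d10 d20.
  exists d => // y /nlt [hy1 hy2]; rewrite ?lexx.
  case: ifP => yL.
    by apply: H1; apply: ltn; lra.
  rewrite (_ : f (y - L) + l - f L = f (y - L) - f 0); last by rewrite f0 fL; ring.
  apply: H2; apply: ltn; move/negbT: yL; rewrite -ltNge => yL; lra.
Qed.

Lemma ext_mono L l f : 0 < L -> GMP L l f -> forall s t, 0 <= s <= 2 * L -> 0 <= t <= 2 * L ->
  s <= t -> ext L l f s <= ext L l f t.
Proof.
move=> L0 [fr fm f0 fL _] s t /andP[s0 s1] /andP[t0 t1] st; rewrite /ext.
case: (lerP s L) => sL; case: (lerP t L) => tL.
- by apply: fm => //; apply/andP; split; lra.
- have /andP[h1 h2] := fr s (ltac:(apply/andP; split; lra)).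
  have /andP[h3 h4] := fr (t - L) (ltac:(apply/andP; split; lra)).
  lra.
- lra.
- have := fm (s - L) (t - L) (ltac:(apply/andP; split; lra)) (ltac:(apply/andP; split; lra)) (ltac:(lra)).
  lra.
Qed.

Lemma ext_inv L l f G : 0 < L -> 0 < l -> GMP L l f -> GMP l L G ->
  (forall s, 0 <= s <= L -> G (f s) = s) -> (forall v, 0 <= v <= l -> f (G v) = v) ->
  forall s, 0 <= s <= 2 * L -> ext l L G (ext L l f s) = s.
Proof.
move=> L0 l0 [fr fm f0 fL _] [Gr Gm G0 GL _] GF FG s /andP[s0 s1]; rewrite /ext.
case: (lerP s L) => sL.
  have /andP[h1 h2] := fr s (ltac:(apply/andP; split; lra)).
  by rewrite h2 GF //; apply/andP; split; lra.
have /andP[h1 h2] := fr (s - L) (ltac:(apply/andP; split; lra)).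
case: ifP => h.
  have e : f (s - L) = 0 by lra.
  have := GF (s - L) (ltac:(apply/andP; split; lra)); rewrite e G0; lra.
rewrite (_ : f (s - L) + l - l = f (s - L)); last by ring.
rewrite GF; [ring | apply/andP; split; lra].
Qed.

End D.

Section E.
Variable R : realType.
Implicit Types (a b t s u x y : R) (f g : R -> R).

Lemma Gm_GMP L l f : 0 < L -> isGmor L l f -> GMP L l f.
Proof.
move=> L0 H; split.
- exact: Gm_range_in H.
- exact: Gm_mono H.
- exact: Gm_0 H.
- exact: Gm_a H.
- exact: Gm_gc H.
Qed.

Lemma Gm_invGMP L l f : 0 < L -> isGmor L l f -> exists G,
  [/\ GMP l L G, forall s, 0 <= s <= L -> G (f s) = s & forall v, 0 <= v <= l -> f (G v) = v].
Proof.
move=> L0 H; have [G [G1 G2 G3 G4]] := Gm_inv L0 H.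
have f0 := Gm_0 L0 H; have fL := Gm_a L0 H.
have h0 : (0:R) <= 0 <= L by rewrite lexx ltW.
have hL : 0 <= L <= L by rewrite lexx ltW.
exists G; split => //; split => //.
- move=> s t hs ht st; rewrite leNgt; apply/negP => ts.
  have := Gm_lt L0 H (G1 t) (G1 s) ts; rewrite !G3 //; lra.
- by rewrite -{1}f0 G2.
- by rewrite -{1}fL G2.
Qed.

Definition spl L l1 f := xget 0 [set a : R | 0 <= a <= L /\ f a = l1].

Lemma spl_spec L l1 l2 f : 0 < L -> 0 < l1 -> 0 < l2 -> isGmor L (l1 + l2) f ->
  [/\ 0 < spl L l1 f < L, f (spl L l1 f) = l1 &
      forall m, 0 <= m <= L -> f m = l1 -> m = spl L l1 f].
Proof.
move=> L0 l10 l20 H; rewrite /spl.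
have [G [G1 G2 G3 G4]] := Gm_inv L0 H.
have ex : exists a, [set a : R | 0 <= a <= L /\ f a = l1] a.
  exists (G l1); split => //; apply: G3; apply/andP; split; lra.
have [/andP[s0 s1] fs] := xgetPex 0 ex.
have f0 := Gm_0 L0 H; have fL := Gm_a L0 H.
split => //.
- apply/andP; split; rewrite lt_neqAle ?s0 ?s1 ?andbT; apply/eqP => e.
    by move: fs; rewrite -e f0; lra.
  by move: fs; rewrite e fL; lra.
- move=> m hm fm; apply: (Gm_inj L0 H) => //; first by rewrite s0 s1.
  by rewrite fm fs.
Qed.

Definition sw L l1 l2 f t := ext L (l1 + l2) f (clampR L t + spl L l1 f) - l1.

Lemma sw_isGmor L l1 l2 f : 0 < L -> 0 < l1 -> 0 < l2 -> isGmor L (l1 + l2) f ->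
  isGmor L (l2 + l1) (sw L l1 l2 f).
Proof.
move=> L0 l10 l20 H.
have [/andP[a0 aL] fa _] := spl_spec L0 l10 l20 H.
set a := spl L l1 f in a0 aL fa *.
have HF := Gm_GMP L0 H.
have [G [HG GF FG]] := Gm_invGMP L0 H.
have l0 : 0 < l1 + l2 by lra.
have Ga : G l1 = a by rewrite -fa GF //; apply/andP; split; lra.
have eF1 : ext L (l1 + l2) f a = l1 by rewrite /ext ltW.
have eF2 : ext L (l1 + l2) f (L + a) = l1 + (l1 + l2).
  rewrite /ext; have -> : (L + a <= L) = false by apply/negbTE; rewrite -ltNge; lra.
  by rewrite (_ : L + a - L = a) ?fa //; ring.
have eG1 : ext (l1 + l2) L G l1 = a by rewrite /ext ifT ?Ga //; lra.
have eG2 : ext (l1 + l2) L G (l1 + l2 + l1) = a + L.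
  rewrite /ext; have -> : (l1 + l2 + l1 <= l1 + l2) = false by apply/negbTE; rewrite -ltNge; lra.
  by rewrite (_ : l1 + l2 + l1 - (l1 + l2) = l1) ?Ga //; ring.
have mF := ext_mono L0 HF; have mG := ext_mono l0 HG.
apply: (@isGmor_intro _ _ _ _
   (fun u => ext (l1 + l2) L G (clampR (l2 + l1) u + l1) - a)) => //.
- by move=> t; rewrite /sw clamp_idem // ltW.
- move=> t ht; have ct : clampR L t = t by apply: clamp_id.
  rewrite /sw ct -/a.
  have /andP[t0 t1] := ht.
  have h1 := mF a (t + a) (ltac:(apply/andP; split; lra)) (ltac:(apply/andP; split; lra)) (ltac:(lra)).
  have h2 := mF (t + a) (L + a) (ltac:(apply/andP; split; lra)) (ltac:(apply/andP; split; lra)) (ltac:(lra)).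
  apply/andP; split; lra.
- move=> s t hs ht st; have cs : clampR L s = s by apply: clamp_id.
  have ct : clampR L t = t by apply: clamp_id.
  rewrite /sw cs ct -/a; move: hs ht => /andP[s0 s1] /andP[t0 t1].
  have := mF (s + a) (t + a) (ltac:(apply/andP; split; lra)) (ltac:(apply/andP; split; lra)) (ltac:(lra)).
  lra.
- move=> x _; apply: gc_cs; [exact: ltW | exact: ext_gc].
- move=> u hu; have cu : clampR (l2 + l1) u = u by apply: clamp_id.
  rewrite cu; move: hu => /andP[u0 u1].
  have h1 := mG l1 (u + l1) (ltac:(apply/andP; split; lra)) (ltac:(apply/andP; split; lra)) (ltac:(lra)).
  have h2 := mG (u + l1) (l1 + l2 + l1) (ltac:(apply/andP; split; lra)) (ltac:(apply/andP; split; lra)) (ltac:(lra)).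
  apply/andP; split; lra.
- move=> t ht; have ct : clampR L t = t by apply: clamp_id.
  rewrite /sw ct -/a; move: ht => /andP[t0 t1].
  have h1 := mF a (t + a) (ltac:(apply/andP; split; lra)) (ltac:(apply/andP; split; lra)) (ltac:(lra)).
  have h2 := mF (t + a) (L + a) (ltac:(apply/andP; split; lra)) (ltac:(apply/andP; split; lra)) (ltac:(lra)).
  rewrite clamp_id; last by apply/andP; split; lra.
  rewrite (_ : ext L (l1 + l2) f (t + a) - l1 + l1 = ext L (l1 + l2) f (t + a)); last by ring.
  rewrite (ext_inv L0 l0 HF HG GF FG); [ring | apply/andP; split; lra].
- move=> u hu; have cu : clampR (l2 + l1) u = u by apply: clamp_id.
  rewrite /sw cu -/a; move: hu => /andP[u0 u1].
  have h1 := mG l1 (u + l1) (ltac:(apply/andP; split; lra)) (ltac:(apply/andP; split; lra)) (ltac:(lra)).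
  have h2 := mG (u + l1) (l1 + l2 + l1) (ltac:(apply/andP; split; lra)) (ltac:(apply/andP; split; lra)) (ltac:(lra)).
  rewrite clamp_id; last by apply/andP; split; lra.
  rewrite (_ : ext (l1 + l2) L G (u + l1) - a + a = ext (l1 + l2) L G (u + l1)); last by ring.
  rewrite (ext_inv l0 L0 HG HF FG GF); [ring | apply/andP; split; lra].
- move=> u _; apply: gc_cs; [lra | exact: ext_gc].
Qed.

End E.

Section F.
Variable R : realType.
Implicit Types (a b t s u x y : R) (f g : R -> R).

Definition GP m l f := [/\ forall t, f t = f (clampR m t), f 0 = 0, f m = l & forall t, 0 <= f t <= l].

Lemma Gm_GP m l f : 0 < m -> isGmor m l f -> GP m l f.
Proof.
move=> m0 H; split.
- exact: Gm_clamp H.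
- exact: Gm_0 H.
- exact: Gm_a H.
- exact: Gm_range H.
Qed.

Lemma GP_comp m k l f p : GP m k f -> GP k l p -> GP m l (p \o f).
Proof.
move=> [f1 f2 f3 f4] [p1 p2 p3 p4]; split => /=.
- by move=> t; rewrite -f1.
- by rewrite f2 p2.
- by rewrite f3 p3.
- by move=> t; apply: p4.
Qed.

Lemma tens_interchange m k l' f h p c t : 0 < m -> GP m k f -> (forall t, 0 <= h t) ->
  p k = l' -> c 0 = 0 ->
  tens m l' (p \o f) (c \o h) t = tens k l' p c (tens m k f h t).
Proof.
move=> m0 [f1 f2 f3 f4] h0 pk c0; rewrite /tens /=.
case: ifP => tm.
  by have /andP[_ ->] := f4 t.
have := h0 (t - m) => ht.
case: ifP => hk.
  have e : h (t - m) = 0 by lra.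
  by rewrite e add0r pk c0 add0r.
by rewrite (_ : h (t - m) + k - k = h (t - m)) //; ring.
Qed.

Lemma sw_tens L l1 l2 m1 m2 psi p1 p2 : 0 < m1 -> 0 < m2 -> L = m1 + m2 -> 0 < l1 -> 0 < l2 ->
  isGmor L (l1 + l2) psi -> GP m1 l1 p1 -> GP m2 l2 p2 ->
  (forall t, psi t = tens m1 l1 p1 p2 t) ->
  forall t, sw L l1 l2 psi t = tens m2 l2 p2 p1 t.
Proof.
move=> m10 m20 eL l10 l20 H [a1 a2 a3 a4] [b1 b2 b3 b4] Hp.
have L0 : 0 < L by lra.
have [_ _ uq] := spl_spec L0 l10 l20 H.
have e : spl L l1 psi = m1.
  apply/esym/uq; first by apply/andP; split; lra.
  by rewrite Hp /tens lexx a3.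
move=> t; rewrite /sw e /ext clampE; last lra.
rewrite /tens.
case: (lerP t 0) => t0.
  rewrite add0r ifT; last lra.
  rewrite Hp /tens lexx a3 subrr ifT; last lra.
  by rewrite b1 clampE ?t0 ?b2 //; lra.
case: (lerP t L) => tL.
  case: (lerP t m2) => tm2.
    rewrite ifT; last lra.
    rewrite Hp /tens ifF; last by apply/negbTE; rewrite -ltNge; lra.
    by rewrite (_ : t + m1 - m1 = t); [ring | ring].
  rewrite ifF; last by apply/negbTE; rewrite -ltNge; lra.
  rewrite Hp /tens ifT; last lra.
  by rewrite (_ : t + m1 - L = t - m2); [ring | rewrite eL; ring].
rewrite ifF; last by apply/negbTE; rewrite -ltNge; lra.
rewrite ifF; last by apply/negbTE; rewrite -ltNge; lra.
rewrite (_ : L + m1 - L = m1); last by ring.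
rewrite Hp /tens lexx a3 a1 clampE; last lra.
rewrite ifF; last by apply/negbTE; rewrite -ltNge; lra.
rewrite ifF; last by apply/negbTE; rewrite -ltNge; lra.
by rewrite a3; ring.
Qed.

Section Decomp.
Variables (L l1 l2 : R) (psi : R -> R).
Hypotheses (L0 : 0 < L) (l10 : 0 < l1) (l20 : 0 < l2) (H : isGmor L (l1 + l2) psi).

Definition dA := spl L l1 psi.
Definition dp1 t := psi (clampR dA t).
Definition dp2 t := psi (clampR (L - dA) t + dA) - l1.

Lemma dA_spec : 0 < dA < L /\ psi dA = l1.
Proof. by have [? ? _] := spl_spec L0 l10 l20 H. Qed.

Lemma decomp_GP1 : GP dA l1 dp1.
Proof.
have [/andP[a0 aL] pa] := dA_spec.
have p0 := Gm_0 L0 H.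
split; rewrite /dp1.
- by move=> t; rewrite clamp_idem // ltW.
- by rewrite clamp_id ?lexx ?ltW.
- by rewrite clamp_id ?lexx ?ltW.
- move=> t; have /andP[c0 c1] := clamp_in t (ltW a0).
  have /andP[r0 _] := Gm_range L0 H (clampR dA t).
  have h := Gm_mono H (s := clampR dA t) (t := dA).
  rewrite pa in h; rewrite r0 /=; apply: h => //; apply/andP; split; lra.
Qed.

Lemma decomp_GP2 : GP (L - dA) l2 dp2.
Proof.
have [/andP[a0 aL] pa] := dA_spec.
have pL := Gm_a L0 H.
have La : 0 <= L - dA by lra.
split; rewrite /dp2.
- by move=> t; rewrite clamp_idem.
- by rewrite clamp_id ?lexx ?La // add0r pa subrr.
- by rewrite clamp_id ?lexx ?La // (_ : L - dA + dA = L) ?pL; ring.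
- move=> t; have /andP[c0 c1] := clamp_in t La.
  have h1 := Gm_mono H (s := dA) (t := clampR (L - dA) t + dA).
  have h2 := Gm_mono H (s := clampR (L - dA) t + dA) (t := L).
  rewrite pa in h1; rewrite pL in h2.
  have := h1 (ltac:(apply/andP; split; lra)) (ltac:(apply/andP; split; lra)) (ltac:(lra)).
  have := h2 (ltac:(apply/andP; split; lra)) (ltac:(apply/andP; split; lra)) (ltac:(lra)).
  move=> *; apply/andP; split; lra.
Qed.

Lemma decomp_eq t : psi t = tens dA l1 dp1 dp2 t.
Proof.
have [/andP[a0 aL] pa] := dA_spec.
rewrite /tens /dp1 /dp2 (Gm_clamp H t).
have cL := clampE t (ltW L0); have cA := clampE t (ltW a0).
case: (lerP t 0) => t0.
  by rewrite ifT ?cL ?cA ?t0 //; lra.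
have t0' : (t <= 0) = false by apply/negbTE; rewrite -ltNge.
case: (lerP t dA) => ta.
  have ta' : t <= L by lra.
  by rewrite cL cA t0' ta ta'.
have cB := clampE (t - dA) (ltW (ltac:(lra) : 0 < L - dA)).
rewrite cB cL t0'.
have -> : (t - dA <= 0) = false by apply/negbTE; rewrite -ltNge; lra.
rewrite subrK.
case: (lerP t L) => tL.
  have h : t - dA <= L - dA by lra.
  by rewrite h subrK.
have h : (t - dA <= L - dA) = false by apply/negbTE; rewrite -ltNge; lra.
by rewrite h subrK.
Qed.

End Decomp.

Lemma sw_sw L l1 l2 psi : 0 < L -> 0 < l1 -> 0 < l2 -> isGmor L (l1 + l2) psi ->
  forall t, sw L l2 l1 (sw L l1 l2 psi) t = psi t.
Proof.
move=> L0 l10 l20 H.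
have [/andP[a0 aL] pa] := dA_spec L0 l10 l20 H.
have G1 := decomp_GP1 L0 l10 l20 H.
have G2 := decomp_GP2 L0 l10 l20 H.
have E := decomp_eq L0 l10 l20 H.
have eL1 : L = dA L l1 psi + (L - dA L l1 psi) by rewrite addrC subrK.
have eL2 : L = (L - dA L l1 psi) + dA L l1 psi by rewrite subrK.
have b0 : 0 < L - dA L l1 psi by lra.
have E' := sw_tens a0 b0 eL1 l10 l20 H G1 G2 E.
have H' := sw_isGmor L0 l10 l20 H.
move=> t; rewrite (E t).
exact: (sw_tens b0 a0 eL2 l20 l10 H' G2 G1 E').
Qed.

End F.

Section G.
Variable R : realType.

Lemma sw_cstep (L m1 m2 l1 l2 : R) psi psi' phi1 phi2 :
  0 < L -> 0 < m1 -> 0 < m2 -> 0 < l1 -> 0 < l2 ->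
  isGmor L (m1 + m2) psi -> isGmor m1 l1 phi1 -> isGmor m2 l2 phi2 -> isGmor L (l1 + l2) psi' ->
  (forall t, psi' t = tens m1 l1 phi1 phi2 (psi t)) ->
  forall t, sw L l1 l2 psi' t = tens m2 l2 phi2 phi1 (sw L m1 m2 psi t).
Proof.
move=> L0 m10 m20 l10 l20 H H1 H2 H' E.
have [/andP[a0 aL] pa] := dA_spec L0 m10 m20 H.
have G1 := decomp_GP1 L0 m10 m20 H.
have G2 := decomp_GP2 L0 m10 m20 H.
have D := decomp_eq L0 m10 m20 H.
set a := dA L m1 psi in a0 aL pa G1 G2 D.
set p1 := dp1 L m1 psi in G1 G2 D.
set p2 := dp2 L m1 psi in G1 G2 D.
have b0 : 0 < L - a by lra.
have eL1 : L = a + (L - a) by rewrite addrC subrK.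
have P1 := Gm_GP m10 H1; have P2 := Gm_GP m20 H2.
have p2pos : forall t, 0 <= p2 t by move=> t; case: G2 => _ _ _ /(_ t) /andP[].
have p1pos : forall t, 0 <= p1 t by move=> t; case: G1 => _ _ _ /(_ t) /andP[].
have phi1m := Gm_a m10 H1; have phi10 := Gm_0 m10 H1.
have phi2m := Gm_a m20 H2; have phi20 := Gm_0 m20 H2.
have E2 : forall t, psi' t = tens a l1 (phi1 \o p1) (phi2 \o p2) t.
  move=> t; rewrite E D; symmetry; exact: tens_interchange.
have S1 := sw_tens a0 b0 eL1 l10 l20 H' (GP_comp G1 P1) (GP_comp G2 P2) E2.
have S2 := sw_tens a0 b0 eL1 m10 m20 H G1 G2 D.
move=> t; rewrite S1 S2; exact: tens_interchange.
Qed.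

Definition swG (L l1 l2 : {posnum R}) (psi : Gm L%:num (l1%:num + l2%:num)) :
  Gm L%:num (l2%:num + l1%:num) :=
  exist _ (sw L%:num l1%:num l2%:num (sval psi))
    (sw_isGmor (gt0 L) (gt0 l1) (gt0 l2) (svalP psi)).

Lemma swG_swG (L l1 l2 : {posnum R}) (psi : Gm L%:num (l1%:num + l2%:num)) :
  swG (swG psi) = psi.
Proof.
apply: eq_sig_hprop; first by move=> ?; exact: Prop_irrelevance.
apply: funext => t /=; exact: sw_sw (gt0 L) (gt0 l1) (gt0 l2) (svalP psi) t.
Qed.

Variables (D E : GSpace R) (L : {posnum R}).

Definition swapRaw (D E : GSpace R) (r : Raw D E L) : Raw E D L :=
  let: existT l p := r in
  let: (psi, x1, x2) := p in
  @mkRaw R E D L l.2 l.1 (swG psi) x2 x1.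

Lemma swapRawK (r : Raw D E L) : swapRaw (swapRaw r) = r.
Proof.
case: r => [[l1 l2] [[psi x1] x2]] /=.
by rewrite /mkRaw swG_swG.
Qed.

Lemma swap_cstep (r r' : Raw D E L) : cstep r r' -> cstep (swapRaw r) (swapRaw r').
Proof.
case=> m1 m2 l1 l2 phi1 phi2 psi psi' x1 x2 Hp /=.
apply: CStep => t /=.
apply: sw_cstep; (try exact: gt0); (try exact: svalP); try exact: Hp.
Qed.

End G.

Section H.
Variable R : realType.
Variables (L : {posnum R}).

Lemma swap_ceqv (D E : GSpace R) (r r' : Raw D E L) : ceqv r r' -> ceqv (swapRaw r) (swapRaw r').
Proof.
elim=> [x y H|x|x y _ IH|x y z _ IH1 _ IH2].
- by apply: rst_step; apply: swap_cstep.
- exact: rst_refl.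
- exact: rst_sym.
- exact: rst_trans IH2.
Qed.

Lemma tproj_eq (D E : GSpace R) (r r' : Raw D E L) : ceqv r r' -> tproj r = tproj r'.
Proof.
move=> h; apply: eq_sig_hprop; first by move=> ?; exact: Prop_irrelevance.
apply: funext => z /=; apply: propext; split => hz.
- apply: rst_trans hz; exact: rst_sym.
- exact: rst_trans hz.
Qed.

Lemma tproj_inj (D E : GSpace R) (r r' : Raw D E L) : tproj r = tproj r' -> ceqv r r'.
Proof.
move=> /(congr1 sval) /= e.
have : ceqv r' r' by exact: rst_refl.
by rewrite -e.
Qed.

Lemma tproj_surj (D E : GSpace R) (q : TensG D E L) : exists r, q = tproj r.
Proof.
case: q => S [r e]; exists r.
by apply: eq_sig_hprop => //; move=> ?; exact: Prop_irrelevance.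
Qed.

Definition rep (D E : GSpace R) (q : TensG D E L) : Raw D E L :=
  projT1 (cid (tproj_surj q)).

Lemma repK (D E : GSpace R) (q : TensG D E L) : q = tproj (rep q).
Proof. exact: projT2 (cid (tproj_surj q)). Qed.

Definition Bsw (D E : GSpace R) (q : TensG D E L) : TensG E D L := tproj (swapRaw (rep q)).

Lemma Bsw_tproj (D E : GSpace R) (r : Raw D E L) : Bsw (tproj r) = tproj (swapRaw r).
Proof.
rewrite /Bsw; apply: tproj_eq; apply: swap_ceqv.
apply: tproj_inj; rewrite -repK //.
Qed.

Lemma BswK (D E : GSpace R) (q : TensG D E L) : Bsw (Bsw q) = q.
Proof.
have [r ->] := tproj_surj q.
by rewrite !Bsw_tproj swapRawK.
Qed.

Lemma Bsw_induced (D E : GSpace R) : induced_by_swap (@Bsw D E).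
Proof.
move=> l1 l2 m1 m2 psi x1 x2 psi1 psi2 psi' em H1 H2 Hpsi Hpsi'.
rewrite Bsw_tproj /=; congr tproj; rewrite /mkRaw; do 3 f_equal.
apply: eq_sig_hprop; first by move=> ?; exact: Prop_irrelevance.
apply: funext => t /=; rewrite Hpsi'.
apply: (sw_tens (gt0 m1) (gt0 m2) (esym em) (gt0 l1) (gt0 l2) (svalP psi)) => //.
- exact: Gm_GP (gt0 m1) H1.
- exact: Gm_GP (gt0 m2) H2.
Qed.

End H.

Section T.
Variable R : realType.

Lemma deltaify_fun (A B : Type) (oA : set (set A)) (oB : set (set B)) (f : A -> B) :
  cont oA oB f -> cont (deltaify R oA) (deltaify R oB) f.
Proof.
move=> hf U hU n sigma hs.
have hs' : simplex_cont oB (f \o sigma).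
  move=> W hW; exact: hs _ (hf _ hW).
exact: hU n (f \o sigma) hs'.
Qed.

Lemma gen_top_fin (T : Type) (S : set (set T)) (A : set T) :
  (forall x, A x -> exists (I : finType) (F : I -> set T),
     (forall i, S (F i)) /\ (forall i, F i x) /\ (forall y, (forall i, F i y) -> A y)) ->
  gen_top S A.
Proof.
move=> H x Ax; have [I [F [h1 [h2 h3]]]] := H x Ax.
exists #|I|, (fun j => F (enum_val j)); split; [|split].
- by move=> j; apply: h1.
- by move=> j; apply: h2.
- move=> y hy; apply: h3 => i.
  by have := hy (enum_rank i); rewrite enum_rankK.
Qed.

Lemma gen_top_gen (A B : Type) (SA : set (set A)) (SB : set (set B)) (f : A -> B) :
  (forall S, SB S -> gen_top SA (f @^-1` S)) -> cont (gen_top SA) (gen_top SB) f.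
Proof.
move=> H U hU; apply: gen_top_fin => x /= Ux.
have [n [F [h1 [h2 h3]]]] := hU (f x) Ux.
have hc : forall i : 'I_n, {k : nat & {G : 'I_k -> set A |
   (forall j, SA (G j)) /\ (forall j, G j x) /\ (forall y, (forall j, G j y) -> F i (f y))}}.
  move=> i; have [k hk] := cid (H _ (h1 i) x (h2 i)).
  have [G hG] := cid hk; exact: existT _ k (exist _ G hG).
pose T := {i : 'I_n & 'I_(projT1 (hc i))}.
exists (T : finType); exists (fun p : T => sval (projT2 (hc (projT1 p))) (projT2 p)).
split; [|split].
- by case=> i j /=; case: (projT2 (hc i)) => G [g1 _] /=; apply: g1.
- by case=> i j /=; case: (projT2 (hc i)) => G [_ [g2 _]] /=; apply: g2.
- move=> y hy; apply: h3 => i.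
  move: (hy) => /(_ (existT _ i _)) /=.
  case: (hc i) => k [G [g1 [g2 g3]]] /= hy'.
  by apply: g3 => j; apply: (hy' j).
Qed.

Lemma gen_top_sub (A B : Type) (SA : set (set A)) (SB : set (set B)) (f : A -> B) :
  (forall S, SB S -> SA (f @^-1` S)) -> cont (gen_top SA) (gen_top SB) f.
Proof.
move=> H; apply: gen_top_gen => S hS x hx.
exists 1%N, (fun _ => f @^-1` S); split; [|split].
- by move=> _; apply: H.
- by [].
- by move=> y /(_ ord0).
Qed.

Lemma prod3_swap (A1 A2 B C : Type) (oA1 : set (set A1)) (oA2 : set (set A2))
  (oB : set (set B)) (oC : set (set C)) (f : A1 -> A2) :
  cont oA1 oA2 f ->
  cont (prod3_top R oA1 oB oC) (prod3_top R oA2 oC oB) (fun p => (f p.1.1, p.2, p.1.2)).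
Proof.
move=> hf; apply: deltaify_fun; apply: gen_top_sub.
move=> S [[U [hU ->]]|[[U [hU ->]]|[U [hU ->]]]].
- by left; exists (f @^-1` U); split => //; apply: hf.
- by right; right; exists U.
- by right; left; exists U.
Qed.

Lemma Bsw_cont (D E : GSpace R) (L : {posnum R}) :
  (forall l1 l2 : {posnum R}, cont (@Gtop R L%:num (l1%:num + l2%:num)) (@Gtop R L%:num (l2%:num + l1%:num))
     (@swG R L l1 l2)) ->
  cont (@tens_top R D E L) (@tens_top R E D L) (@Bsw R L D E).
Proof.
move=> hG U hU [l1 l2].
have := prod3_swap (oB := @open (gsp D l1)) (oC := @open (gsp E l2)) (hG l1 l2) (hU (l2, l1)).
congr (prod3_top _ _ _ _ _).
apply: funext => [[[psi x1] x2]] /=.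
by rewrite Bsw_tproj.
Qed.

End T.

Section N.
Variable R : realType.

Lemma hA (y x x' j d : R) : `|y - x'| < j -> j < d / 2 -> `|x - x'| < d / 2 -> `|y - x| < d.
Proof. move=> /nlt [? ?] ? /nlt [? ?]; apply: ltn; lra. Qed.
Lemma hB (x x' d : R) : `|x - x'| < d / 2 -> 0 < d -> `|x' - x| < d.
Proof. move=> /nlt [? ?] ?; apply: ltn; lra. Qed.
Lemma hC (p q r e : R) : `|p - r| < e / 2 -> `|q - r| < e / 2 -> `|p - q| < e.
Proof. move=> /nlt [? ?] /nlt [? ?]; apply: ltn; lra. Qed.

Lemma heine (K : set R) (h : R -> R) : compact K -> (forall x, K x -> gc h x) ->
  forall e : R, 0 < e -> exists2 d : R, 0 < d & forall x, K x -> forall y, `|y - x| < d -> `|h y - h x| < e.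
Proof.
move=> /compact_near_coveringP cK hg e e0.
have := cK R (nbhs (0:R)) (fun i x => forall y, `|y - x| < `|i| -> `|h y - h x| < e) _.
move=> /(_ _) H.
have : \forall i \near (0:R), K `<=` (fun x => forall y, `|y - x| < `|i| -> `|h y - h x| < e).
  apply: H => x Kx.
  have [d d0 Hd] := hg x Kx (e / 2) (ltac:(lra)).
  exists (ball x (d / 2), ball (0:R) (d / 2)); first by split; apply: nbhsx_ballx; lra.
  case=> x' i [/= bx bi] y hy.
  move: bx bi; rewrite /ball /= => bx bi.
  rewrite sub0r normrN in bi.
  apply: hC (Hd _ (hA hy bi bx)) (Hd _ (hB bx d0)).
move=> /nbhs_ballP [r /= r0 Hr].
have := Hr (r / 2); rewrite /ball /= sub0r normrN gtr0_norm; last lra.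
move=> /(_ ltac:(lra)) Q.
exists (r / 2); first lra.
have hr : `|r / 2| = r / 2 by rewrite gtr0_norm //; lra.
move=> x Kx y hy; apply: (Q x Kx); rewrite ?hr; exact: hy.
Qed.
Lemma hD (hx hx' y i r : R) : `|y - hx'| < `|i| -> `|i| < r / 2 -> `|hx' - hx| < r / 2 -> `|hx - y| < r.
Proof. move=> /nlt [? ?] ? /nlt [? ?]; apply: ltn; lra. Qed.

Lemma margin (K V : set R) (h : R -> R) : compact K -> (forall x, K x -> gc h x) ->
  open V -> (forall x, K x -> V (h x)) ->
  exists2 e : R, 0 < e & forall x, K x -> forall y, `|y - h x| < e -> V y.
Proof.
move=> /compact_near_coveringP cK hg oV hV.
have := cK R (nbhs (0:R)) (fun i x => forall y, `|y - h x| < `|i| -> V y) _.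
move=> /(_ _) H.
have : \forall i \near (0:R), K `<=` (fun x => forall y, `|y - h x| < `|i| -> V y).
  apply: H => x Kx.
  have : open_nbhs (h x) V by split => //; apply: hV.
  rewrite open_nbhsE => -[_] /nbhs_ballP [r /= r0 Hr].
  have [d d0 Hd] := hg x Kx (r / 2) (ltac:(lra)).
  exists (ball x d, ball (0:R) (r / 2)); first by split; apply: nbhsx_ballx; lra.
  case=> x' i [/= bx bi] y hy.
  move: bx bi; rewrite /ball /= => bx bi.
  rewrite sub0r normrN in bi.
  apply: Hr; rewrite /ball /=.
  apply: hD hy bi _; apply: Hd; rewrite distrC; exact: bx.
move=> /nbhs_ballP [r /= r0 Hr].
have := Hr (r / 2); rewrite /ball /= sub0r normrN gtr0_norm; last lra.
move=> /(_ ltac:(lra)) Q.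
exists (r / 2); first lra.
have hr : `|r / 2| = r / 2 by rewrite gtr0_norm //; lra.
move=> x Kx y hy; apply: (Q x Kx); rewrite ?hr; exact: hy.
Qed.

End N.

Section CO.
Variable R : realType.

Lemma idx_ex (N : nat) (h v : R) : 0 < h -> (0 < N)%N -> 0 <= v <= N%:R * h ->
  exists i : nat, (i < N)%N /\ i%:R * h <= v <= (i.+1)%:R * h.
Proof.
move=> h0; elim: N => [//|N IH] _ /andP[v0 v1].
case: (posnP N) => [N0|Npos].
  exists 0%N; split => //; rewrite mul0r v0 /=; move: v1; rewrite N0 //.
case: (lerP v (N%:R * h)) => vN.
  have [i [i1 i2]] := IH Npos (ltac:(by rewrite v0 vN)).
  by exists i; split => //; apply: ltn_trans i1 _.
by exists N; split => //; rewrite (ltW vN) v1.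
Qed.

Lemma co_nbhd (a b : R) (psi : Gm a b) (e : R) : 0 < a -> 0 < b -> 0 < e ->
  exists n (F : 'I_n -> set (Gm a b)),
    (forall i, @co_subbasis R a b (F i)) /\ (forall i, F i psi) /\
    (forall f, (forall i, F i f) -> forall t, 0 <= t <= a -> `|sval f t - sval psi t| < e).
Proof.
move=> a0 b0 e0.
have [G [[Gr GmG G0 Gb _] GF FG]] := Gm_invGMP a0 (svalP psi).
set x := b * 2 / e.
have x0 : 0 <= x by rewrite /x; apply: divr_ge0 => //; lra.
have := archi_boundP x0; set N0 := Num.Def.archi_bound x => hN0.
pose N := N0.+1.
have NR : 0 < N%:R :> R by rewrite ltr0n.
have xN : x < N%:R by apply: lt_le_trans hN0 _; rewrite ler_nat.
pose h := b / N%:R.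
have h0 : 0 < h by apply: divr_gt0.
have Nh : N%:R * h = b by rewrite /h mulrC divfK //; apply: lt0r_neq0.
have he : h < e / 2.
  rewrite /h ltr_pdivrMr // ; move: xN; rewrite /x ltr_pdivrMr // => ?; lra.
pose u (i : nat) : R := i%:R * h.
pose tt (i : nat) := G (u i).
have uin : forall i : nat, (i <= N)%N -> 0 <= u i <= b.
  move=> i iN; rewrite /u -Nh; apply/andP; split.
    by apply: mulr_ge0; [exact: ler0n | exact: ltW].
  by apply: ler_wpM2r; [exact: ltW | rewrite ler_nat].
exists N, (fun i : 'I_N => [set f : Gm a b | forall t, `[tt i, tt i.+1]%classic t ->
   (ball (u i + h / 2) (h / 2 + e / 2) `&` [set v | 0 <= v <= b]) (sval f t)]).
split; [|split].
- move=> i; exists `[tt i, tt i.+1]%classic, (ball (u i + h / 2) (h / 2 + e / 2)).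
  split; first exact: segment_compact.
  split.
    move=> t /=; rewrite in_itv /= => /andP[t1 t2].
    have /andP[g1 _] := Gr (u i) (uin i (ltnW (ltn_ord i))).
    have /andP[_ g2] := Gr (u i.+1) (uin i.+1 (ltn_ord i)).
    move: t1 t2; rewrite /tt => t1 t2; apply/andP; split; lra.
  by split; first exact: ball_open.
- move=> i t /=; rewrite in_itv /= => /andP[t1 t2].
  move: t1 t2; rewrite /tt => t1 t2.
  have ui := uin i (ltnW (ltn_ord i)); have uj := uin i.+1 (ltn_ord i).
  have /andP[g1 _] := Gr (u i) ui.
  have /andP[_ g2] := Gr (u i.+1) uj.
  have tin : 0 <= t <= a by apply/andP; split; lra.
  have m1 := Gm_mono (svalP psi) (Gr _ ui) tin t1.
  have m2 := Gm_mono (svalP psi) tin (Gr _ uj) t2.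
  rewrite FG // in m1; rewrite FG // in m2.
  have eu : u i.+1 = u i + h by rewrite /u -natr1 mulrDl mul1r.
  split; last exact: Gm_range_in (svalP psi) _ tin.
  rewrite /ball /=; apply: ltn; lra.
- move=> f Hf t tin.
  have /andP[v0 v1] := Gm_range_in (svalP psi) tin.
  have hv : 0 <= sval psi t <= N%:R * h by rewrite Nh v0 v1.
  have [i [iN /andP[i1 i2]]] := idx_ex h0 (isT : (0 < N)%N) hv.
  have := Hf (Ordinal iN) t; rewrite /= in_itv /= /tt.
  have ui := uin i (ltnW iN); have uj := uin i.+1 iN.
  have t1 : G (u i) <= t.
    rewrite -[X in _ <= X](GF t tin); apply: GmG => //; by rewrite v0 v1.
  have t2 : t <= G (u i.+1).
    rewrite -[X in X <= _](GF t tin); apply: GmG => //; by rewrite v0 v1.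
  rewrite t1 t2 => /(_ isT) [+ _]; rewrite /ball /= => /nlt [c1 c2].
  have eu : u i.+1 = u i + h by rewrite /u -natr1 mulrDl mul1r.
  move: i1 i2; rewrite -/(u i) -/(u i.+1) => i1 i2.
  apply: ltn; lra.
Qed.
End CO.


Section U.
Variable R : realType.

Lemma sw_unif (L l1 l2 : R) psi (e : R) : 0 < L -> 0 < l1 -> 0 < l2 ->
  isGmor L (l1 + l2) psi -> 0 < e ->
  exists2 d : R, 0 < d & forall f, isGmor L (l1 + l2) f ->
    (forall t, 0 <= t <= L -> `|f t - psi t| < d) ->
    forall t, 0 <= t <= L -> `|sw L l1 l2 f t - sw L l1 l2 psi t| < e.
Proof.
move=> L0 l10 l20 H e0.
have HP := Gm_GMP L0 H.
have [d1 d10 Hd1] := heine (@segment_compact R 0 (2 * L))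
  (fun x _ => ext_gc L0 HP x) (ltac:(lra) : 0 < e / 2).
have [/andP[a0 aL] pa _] := spl_spec L0 l10 l20 H.
set a := spl L l1 psi in a0 aL pa *.
have [r1 [r10 r1a r1b]] := min_pos (ltac:(lra) : 0 < d1 / 2) (ltac:(lra) : 0 < a / 2).
have [r [r0 ra rb]] := min_pos r10 (ltac:(lra) : 0 < (L - a) / 2).
have g1 : psi (a - r) < l1.
  rewrite -[X in _ < X]pa; apply: (Gm_lt L0 H); try (apply/andP; split); lra.
have g2 : l1 < psi (a + r).
  rewrite -[X in X < _]pa; apply: (Gm_lt L0 H); try (apply/andP; split); lra.
have [d2 [d20 d2a d2b]] := min_pos (ltac:(lra) : 0 < l1 - psi (a - r)) (ltac:(lra) : 0 < psi (a + r) - l1).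
have [d [d0 da db]] := min_pos d20 (ltac:(lra) : 0 < e / 2).
exists d => // f Hf Hc t tin.
have [/andP[n0 nL] fn _] := spl_spec L0 l10 l20 Hf.
set n := spl L l1 f in n0 nL fn *.
have hn1 : a - r < n.
  rewrite ltNge; apply/negP => hn.
  have := Gm_mono Hf (s := n) (t := a - r) (ltac:(apply/andP; split; lra)) (ltac:(apply/andP; split; lra)) hn.
  have /nlt [? ?] := Hc (a - r) (ltac:(apply/andP; split; lra)).
  lra.
have hn2 : n < a + r.
  rewrite ltNge; apply/negP => hn.
  have := Gm_mono Hf (s := a + r) (t := n) (ltac:(apply/andP; split; lra)) (ltac:(apply/andP; split; lra)) hn.
  have /nlt [? ?] := Hc (a + r) (ltac:(apply/andP; split; lra)).
  lra.
have /andP[t0 t1] := tin.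
rewrite /sw -/a -/n clamp_id //.
have A1 : `|ext L (l1 + l2) f (t + n) - ext L (l1 + l2) psi (t + n)| < d.
  rewrite /ext; case: ifP => tn.
    by apply: Hc; apply/andP; split; lra.
  rewrite (_ : f (t + n - L) + (l1 + l2) - (psi (t + n - L) + (l1 + l2)) = f (t + n - L) - psi (t + n - L)); last by ring.
  by apply: Hc; move/negbT: tn; rewrite -ltNge => tn; apply/andP; split; lra.
have hK : `[0, 2 * L]%classic (t + a) by rewrite /= in_itv /=; apply/andP; split; lra.
have hy : `|t + n - (t + a)| < d1 by apply: ltn; lra.
have A2 := Hd1 (t + a) hK (t + n) hy.
move: A1 A2 => /nlt [? ?] /nlt [? ?]; apply: ltn; lra.
Qed.

End U.

Section M.
Variable R : realType.

Lemma co_sw_open (L l1 l2 : {posnum R}) (S : set (Gm L%:num (l2%:num + l1%:num))) :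
  @co_subbasis R L%:num (l2%:num + l1%:num) S ->
  gen_top (@co_subbasis R L%:num (l1%:num + l2%:num)) (@swG R L l1 l2 @^-1` S).
Proof.
move=> [K [V [cK [KL [oV ->]]]]] psi /= Hpsi.
have L0 : 0 < L%:num by exact: gt0.
have l10 : 0 < l1%:num by exact: gt0.
have l20 : 0 < l2%:num by exact: gt0.
have hg : forall x, K x -> gc (sw L%:num l1%:num l2%:num (sval psi)) x.
  move=> x _; have := Gm_gc L0 (svalP (swG psi)) x; by [].
have [eta eta0 Heta] := margin cK hg oV (fun x Kx => (Hpsi x Kx).1).
have [d d0 Hd] := sw_unif L0 l10 l20 (svalP psi) eta0.
have [n [F [hF1 [hF2 hF3]]]] := co_nbhd psi L0 (ltac:(apply: addr_gt0; exact: gt0)) d0.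
exists n, F; split; [|split] => //.
move=> f Hf t Kt; split.
- apply: (Heta t Kt); exact: Hd (sval f) (svalP f) (hF3 f Hf) t (KL t Kt).
- exact: Gm_range L0 (svalP (swG f)) t.
Qed.

Lemma swG_cont (L l1 l2 : {posnum R}) :
  cont (@Gtop R L%:num (l1%:num + l2%:num)) (@Gtop R L%:num (l2%:num + l1%:num)) (@swG R L l1 l2).
Proof. apply: deltaify_fun; apply: gen_top_gen => S hS; exact: co_sw_open. Qed.

Lemma part1 (D E : GSpace R) (L : {posnum R}) :
  exists B : TensG D E L -> TensG E D L,
    induced_by_swap B /\ homeo (@tens_top R D E L) (@tens_top R E D L) B.
Proof.
exists (@Bsw R L D E); split; first exact: Bsw_induced.
exists (@Bsw R L E D); split; [|split; [|split]].
- exact: BswK.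
- exact: BswK.
- apply: Bsw_cont => l1 l2; exact: swG_cont.
- apply: Bsw_cont => l1 l2; exact: swG_cont.
Qed.

End M.

Section R1.
Variable R : realType.

Lemma decomp_G1 (L l1 l2 : R) (psi : R -> R) : 0 < L -> 0 < l1 -> 0 < l2 -> isGmor L (l1 + l2) psi ->
  isGmor (dA L l1 psi) l1 (dp1 L l1 psi).
Proof.
move=> L0 l10 l20 H.
have [/andP[a0 aL] pa] := dA_spec L0 l10 l20 H.
have [p1c p10 p1a p1r] := decomp_GP1 L0 l10 l20 H.
have [G [[Gr GmG G0 Gb Gg] GF FG]] := Gm_invGMP L0 H.
set a := dA L l1 psi in a0 aL pa p1c p10 p1a p1r *.
have Ga : G l1 = a by rewrite -pa GF //; apply/andP; split; lra.
apply: (@isGmor_intro _ _ _ _ (fun u => G (clampR l1 u))) => //.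
- move=> s t hs ht st; rewrite /dp1 !clamp_id //; apply: (Gm_mono H) => //.
    by case/andP: ht => ht1 ht2; apply/andP; split; lra.
  by case/andP: hs => hs1 hs2; apply/andP; split; lra.
- move=> x _; have -> : dp1 L l1 psi = fun u => psi (clampR a u + 0) - 0.
    by apply: funext => u; rewrite /dp1 addr0 subr0.
  apply: gc_cs; [lra | exact: Gm_gc L0 H].
- move=> u hu; rewrite clamp_id //.
  have /andP[g1 g2] := Gr u (ltac:(case/andP: hu => hu1 hu2; apply/andP; split; lra)).
  have := GmG u l1 (ltac:(case/andP: hu => hu1 hu2; apply/andP; split; lra)) (ltac:(apply/andP; split; lra)) (ltac:(by case/andP: hu)).
  rewrite Ga => ?; apply/andP; split; lra.
- move=> t ht; rewrite /dp1 !clamp_id //.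
    by apply: GF; case/andP: ht => ht1 ht2; apply/andP; split; lra.
  have := p1r t; rewrite /dp1 clamp_id //.
- move=> u hu.
  have cu : clampR l1 u = u by apply: clamp_id.
  have hu' : 0 <= u <= l1 + l2 by case/andP: hu => hu1 hu2; apply/andP; split; lra.
  have /andP[g1 g2] := Gr u hu'.
  have gu := GmG u l1 hu' (ltac:(apply/andP; split; lra)) (ltac:(by case/andP: hu)).
  rewrite Ga in gu.
  have ca : clampR a (G u) = G u by apply: clamp_id; apply/andP; split; lra.
  by rewrite /dp1 cu ca FG.
- move=> u _; have -> : (fun u => G (clampR l1 u)) = fun u => G (clampR l1 u + 0) - 0.
    by apply: funext => v; rewrite addr0 subr0.
  apply: gc_cs; [lra | exact: Gg].
Qed.

Lemma decomp_G2 (L l1 l2 : R) (psi : R -> R) : 0 < L -> 0 < l1 -> 0 < l2 -> isGmor L (l1 + l2) psi ->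
  isGmor (L - dA L l1 psi) l2 (dp2 L l1 psi).
Proof.
move=> L0 l10 l20 H.
have [/andP[a0 aL] pa] := dA_spec L0 l10 l20 H.
have [p2c p20 p2a p2r] := decomp_GP2 L0 l10 l20 H.
have [G [[Gr GmG G0 Gb Gg] GF FG]] := Gm_invGMP L0 H.
set a := dA L l1 psi in a0 aL pa p2c p20 p2a p2r *.
have Ga : G l1 = a by rewrite -pa GF //; apply/andP; split; lra.
have La : 0 <= L - a by lra.
apply: (@isGmor_intro _ _ _ _ (fun u => G (clampR l2 u + l1) - a)) => //; first lra.
- move=> s t hs ht st.
  have cs : clampR (L - a) s = s by apply: clamp_id.
  have ct : clampR (L - a) t = t by apply: clamp_id.
  rewrite /dp2 -/a cs ct.
  have := Gm_mono H (s := s + a) (t := t + a)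
    (ltac:(case/andP: hs => hs1 hs2; apply/andP; split; lra))
    (ltac:(case/andP: ht => ht1 ht2; apply/andP; split; lra)) (ltac:(lra)).
  lra.
- move=> x _; change (gc (fun t => psi (clampR (L - a) t + a) - l1) x).
  apply: gc_cs => //; exact: Gm_gc L0 H.
- move=> u hu.
  have cu : clampR l2 u = u by apply: clamp_id.
  rewrite cu; case/andP: hu => hu1 hu2.
  have h1 := GmG l1 (u + l1) (ltac:(apply/andP; split; lra)) (ltac:(apply/andP; split; lra)) (ltac:(lra)).
  have h2 := GmG (u + l1) (l1 + l2) (ltac:(apply/andP; split; lra)) (ltac:(apply/andP; split; lra)) (ltac:(lra)).
  rewrite Ga in h1; rewrite Gb in h2.
  apply/andP; split; lra.
- move=> t ht.
  have /andP[r1 r2] := p2r t.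
  have c1 : clampR l2 (dp2 L l1 psi t) = dp2 L l1 psi t by apply: clamp_id; rewrite r1 r2.
  rewrite c1.
  have ct : clampR (L - a) t = t by apply: clamp_id.
  rewrite /dp2 -/a ct subrK GF; first by ring.
  by case/andP: ht => ht1 ht2; apply/andP; split; lra.
- move=> u hu.
  have cu : clampR l2 u = u by apply: clamp_id.
  case/andP: hu => hu1 hu2.
  have h1 := GmG l1 (u + l1) (ltac:(apply/andP; split; lra)) (ltac:(apply/andP; split; lra)) (ltac:(lra)).
  have h2 := GmG (u + l1) (l1 + l2) (ltac:(apply/andP; split; lra)) (ltac:(apply/andP; split; lra)) (ltac:(lra)).
  rewrite Ga in h1; rewrite Gb in h2.
  have cg : clampR (L - a) (G (u + l1) - a) = G (u + l1) - a by apply: clamp_id; apply/andP; split; lra.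
  rewrite /dp2 -/a cu cg subrK FG; first by ring.
  apply/andP; split; lra.
- move=> u _; apply: gc_cs => //; lra.
Qed.

End R1.

Section J.
Variable R : realType.

Lemma gc_lip2 (f : R -> R) : (forall x y, x <= y -> 0 <= f y - f x <= 2 * (y - x)) -> forall x, gc f x.
Proof.
move=> H x e e0; exists (e / 2); first lra.
move=> y /nlt [h1 h2].
case: (lerP x y) => xy.
  by have /andP[? ?] := H x y xy; apply: ltn; lra.
by have /andP[? ?] := H y x (ltW xy); apply: ltn; lra.
Qed.

Lemma lip2_clamp (p : R -> R) (a : R) : 0 <= a ->
  (forall x y, x <= y -> 0 <= p y - p x <= 2 * (y - x)) ->
  forall x y, x <= y -> 0 <= p (clampR a y) - p (clampR a x) <= 2 * (y - x).
Proof.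
move=> a0 H x y xy; have /andP[c1 c2] := clamp_ml a0 xy.
have /andP[h1 h2] := H (clampR a x) (clampR a y) (ltac:(lra)).
apply/andP; split; lra.
Qed.

Definition pw (s : R) : R := if s <= 2^-1 then 2 * s else (2 * s + 2) / 3.
Definition pwi (v : R) : R := if v <= 1 then v / 2 else (3 * v - 2) / 2.
Definition om (t : R) : R := pw (clampR 2 t).
Definition omi (u : R) : R := pwi (clampR 2 u).

Lemma pw_lip (x y : R) : x <= y -> 0 <= pw y - pw x <= 2 * (y - x).
Proof.
move=> xy; rewrite /pw; case: (lerP y (2^-1)) => hy; case: (lerP x (2^-1)) => hx;
  apply/andP; split; lra.
Qed.

Lemma pwi_lip (x y : R) : x <= y -> 0 <= pwi y - pwi x <= 2 * (y - x).
Proof.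
move=> xy; rewrite /pwi; case: (lerP y 1) => hy; case: (lerP x 1) => hx;
  apply/andP; split; lra.
Qed.

Lemma id_lip (x y : R) : x <= y -> 0 <= y - x <= 2 * (y - x).
Proof. move=> xy; apply/andP; split; lra. Qed.

Lemma om_isGmor : isGmor 2 2 om.
Proof.
have c2 : (0:R) <= 2 by lra.
apply: (@isGmor_intro _ _ _ _ omi).
- lra.
- by move=> t; rewrite /om clamp_idem.
- move=> t ht; rewrite /om clamp_id // /pw; case/andP: ht => t0 t2; case: ifP => h.
    apply/andP; split; lra.
  move/negbT: h; rewrite -ltNge => h; apply/andP; split; lra.
- move=> s t hs ht st; have := lip2_clamp c2 pw_lip st; case/andP => h1 h2; rewrite /om; lra.
- move=> x _; apply: gc_lip2; exact: lip2_clamp c2 pw_lip.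
- move=> u hu; rewrite /omi clamp_id // /pwi; case/andP: hu => u0 u2; case: ifP => h.
    apply/andP; split; lra.
  move/negbT: h; rewrite -ltNge => h; apply/andP; split; lra.
- move=> t ht; case/andP: ht => t0 t2.
  have c1 : clampR 2 t = t by apply: clamp_id; rewrite t0 t2.
  rewrite /omi /om c1 /pw.
  case: ifP => h.
    have c : clampR 2 (2 * t) = 2 * t by apply: clamp_id; apply/andP; split; lra.
    by rewrite c /pwi ifT; [field | lra].
  move/negbT: h; rewrite -ltNge => h.
  have c : clampR 2 ((2 * t + 2) / 3) = (2 * t + 2) / 3 by apply: clamp_id; apply/andP; split; lra.
  by rewrite c /pwi ifF; [field | apply/negbTE; rewrite -ltNge; lra].
- move=> u hu; case/andP: hu => u0 u2.
  have c1 : clampR 2 u = u by apply: clamp_id; rewrite u0 u2.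
  rewrite /omi /om c1 /pwi.
  case: ifP => h.
    have c : clampR 2 (u / 2) = u / 2 by apply: clamp_id; apply/andP; split; lra.
    by rewrite c /pw ifT; [field | lra].
  move/negbT: h; rewrite -ltNge => h.
  have c : clampR 2 ((3 * u - 2) / 2) = (3 * u - 2) / 2 by apply: clamp_id; apply/andP; split; lra.
  by rewrite c /pw ifF; [field | apply/negbTE; rewrite -ltNge; lra].
- move=> x _; apply: gc_lip2; exact: lip2_clamp c2 pwi_lip.
Qed.

Lemma id_isGmor : isGmor 2 2 (@clampR R 2).
Proof.
have c2 : (0:R) <= 2 by lra.
have idl := lip2_clamp c2 id_lip.
apply: (@isGmor_intro _ _ _ _ (clampR 2)).
- lra.
- by move=> t; rewrite clamp_idem.
- by move=> t ht; rewrite clamp_id.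
- move=> s t hs ht st; have /andP[? ?] := idl _ _ st; lra.
- move=> x _; apply: gc_lip2; exact: idl.
- by move=> u hu; rewrite clamp_id.
- by move=> t ht; rewrite !clamp_id.
- by move=> u hu; rewrite !clamp_id.
- move=> x _; apply: gc_lip2; exact: idl.
Qed.

End J.

Section K.
Variable R : realType.

Lemma induced_general (D E : GSpace R) (L : {posnum R}) (B : TensG D E L -> TensG E D L) :
  induced_by_swap B -> forall (l1 l2 : {posnum R}) (psi : Gm L%:num (l1%:num + l2%:num)) x1 x2,
  B (tproj (mkRaw psi x1 x2)) = tproj (mkRaw (swG psi) x2 x1).
Proof.
move=> HB l1 l2 psi x1 x2.
have L0 : 0 < L%:num by exact: gt0.
have l10 : 0 < l1%:num by exact: gt0.
have l20 : 0 < l2%:num by exact: gt0.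
have H := svalP psi.
have [/andP[a0 aL] pa] := dA_spec L0 l10 l20 H.
have b0 : 0 < L%:num - dA L%:num l1%:num (sval psi) by lra.
have eL : L%:num = dA L%:num l1%:num (sval psi) + (L%:num - dA L%:num l1%:num (sval psi)) by rewrite addrC subrK.
have e1 : (PosNum a0)%:num = dA L%:num l1%:num (sval psi) by reflexivity.
have e2 : (PosNum b0)%:num = L%:num - dA L%:num l1%:num (sval psi) by reflexivity.
apply: (HB l1 l2 (PosNum a0) (PosNum b0) psi x1 x2 (dp1 L%:num l1%:num (sval psi))
   (dp2 L%:num l1%:num (sval psi)) (swG psi)); rewrite ?e1 ?e2.
- by rewrite -eL.
- exact: decomp_G1 L0 l10 l20 H.
- exact: decomp_G2 L0 l10 l20 H.
- exact: decomp_eq L0 l10 l20 H.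
- move=> t /=.
  exact: (sw_tens a0 b0 eL l10 l20 H (decomp_GP1 L0 l10 l20 H) (decomp_GP2 L0 l10 l20 H) (decomp_eq L0 l10 l20 H) t).
Qed.

Definition inv0 (D E : GSpace R) (L : {posnum R}) (t0 : R) (r : Raw D E L) : Prop :=
  sval (projT2 r).1.1 t0 = (projT1 r).1%:num.

Lemma inv_cstep (D E : GSpace R) (L : {posnum R}) t0 (r r' : Raw D E L) :
  cstep r r' -> (inv0 t0 r <-> inv0 t0 r').
Proof.
case=> m1 m2 l1 l2 phi1 phi2 psi psi' x1 x2 Hp; rewrite /inv0 /= Hp.
have L0 : 0 < L%:num by exact: gt0.
have m10 : 0 < m1%:num by exact: gt0.
have m20 : 0 < m2%:num by exact: gt0.
have P1 := svalP phi1; have P2 := svalP phi2.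
have /andP[s0 s1] := Gm_range L0 (svalP psi) t0.
set s := sval psi t0 in s0 s1 *.
have a1 := Gm_a m10 P1; have z2 := Gm_0 m20 P2.
split => h.
  by rewrite h /tens lexx a1.
move: h; rewrite /tens; case: ifP => hs e.
  apply: (Gm_inj m10 P1); first by rewrite s0 hs.
    by rewrite lexx ltW.
  by rewrite e a1.
exfalso; move/negbT: hs; rewrite -ltNge => hs.
have e2 : sval phi2 (s - m1%:num) = sval phi2 0 by rewrite z2; lra.
have := Gm_inj m20 P2 (s := s - m1%:num) (t := 0) (ltac:(apply/andP; split; lra)) (ltac:(apply/andP; split; lra)) e2.
lra.
Qed.

Lemma inv_ceqv (D E : GSpace R) (L : {posnum R}) t0 (r r' : Raw D E L) :
  ceqv r r' -> (inv0 t0 r <-> inv0 t0 r').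
Proof.
elim=> [x y H|x|x y _ IH|x y z _ IH1 _ IH2].
- exact: inv_cstep.
- by [].
- by split => h; apply/IH.
- by split => h; [apply/IH2/IH1 | apply/IH1/IH2].
Qed.

End K.

Section Lsec.
Variable R : realType.

Lemma deltaify_sup (X : Type) (tau : set (set X)) U : tau U -> deltaify R tau U.
Proof. by move=> hU n sigma hs; exact: hs U hU. Qed.

Lemma gen_top_sub1 (T : Type) (S : set (set T)) U : S U -> gen_top S U.
Proof.
move=> hU x Ux; exists 1%N, (fun _ => U); split; [|split] => //.
by move=> y /(_ ord0).
Qed.

Definition ptT : topologicalType := discrete_topology unit.

Definition ptG : GSpace R.
refine (@Build_GSpace R (fun _ => ptT) (fun _ _ x _ => x) _ _ _ _).
- move=> l; apply: funext => U; apply: propext; split => _.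
    exact: discrete_open.
  apply: deltaify_sup; exact: discrete_open.
- by [].
- by [].
- move=> l1 l2 U _; apply: deltaify_sup; apply: gen_top_sub1.
  left; exists U; split => //; exact: discrete_open.
Defined.

Lemma sw_id1 : sw 2 1 1 (@clampR R 2) 1 = 1.
Proof.
have H : isGmor 2 (1 + 1) (@clampR R 2) := id_isGmor R.
have [_ _ uq] := spl_spec (ltac:(lra) : (0:R) < 2) (ltac:(lra) : (0:R) < 1) (ltac:(lra) : (0:R) < 1) H.
have e : spl 2 1 (@clampR R 2) = 1.
  by apply/esym/uq; [apply/andP; split; lra | apply: clamp_id; apply/andP; split; lra].
rewrite /sw e /ext (@clamp_id R 2 1); last by apply/andP; split; lra.
rewrite ifT; last lra.
rewrite clamp_id; [ring | apply/andP; split; lra].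
Qed.

Lemma om_half : om (2^-1 : R) = 1.
Proof.
rewrite /om clamp_id; last by apply/andP; split; lra.
by rewrite /pw ifT; [field | lra].
Qed.

Lemma sw_om : sw 2 1 1 (@om R) (2^-1) = 3^-1.
Proof.
have H : isGmor 2 (1 + 1) (@om R) := om_isGmor R.
have [_ _ uq] := spl_spec (ltac:(lra) : (0:R) < 2) (ltac:(lra) : (0:R) < 1) (ltac:(lra) : (0:R) < 1) H.
have e : spl 2 1 (@om R) = 2^-1.
  by apply/esym/uq; [apply/andP; split; lra | exact: om_half].
rewrite /sw e /ext (@clamp_id R 2 (2^-1)); last by apply/andP; split; lra.
rewrite ifT; last lra.
rewrite /om clamp_id; last by apply/andP; split; lra.
rewrite /pw ifF; first by field.
by apply/negbTE; rewrite -ltNge; lra.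
Qed.

End Lsec.

Section Msec.
Variable R : realType.

Lemma part2 : exists D E : GSpace R,
  forall B : forall L : {posnum R}, TensG D E L -> TensG E D L,
    (forall L, induced_by_swap (B L)) -> ~ natural_swap B.
Proof.
exists (ptG R), (ptG R) => B HB Hn.
have h2 : (0:R) < 2 by lra.
have h1 : (0:R) < 1 by lra.
pose Lp : {posnum R} := PosNum h2.
pose one : {posnum R} := PosNum h1.
pose omG : Gm Lp%:num Lp%:num := exist _ (@om R) (om_isGmor R).
pose idP : Gm Lp%:num (one%:num + one%:num) := exist _ (@clampR R 2) (id_isGmor R).
pose omP : Gm Lp%:num (one%:num + one%:num) := exist _ (@om R) (om_isGmor R).
pose q := tproj (@mkRaw R (ptG R) (ptG R) Lp one one idP tt tt).
pose q' := tproj (@mkRaw R (ptG R) (ptG R) Lp one one omP tt tt).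
have Hta : tens_act omG q q'.
  exists one, one, idP, omP, tt, tt; split => //.
  move=> t /=; rewrite clamp_id //.
  exact: (Gm_range h2 (om_isGmor R) t).
have := Hn Lp Lp omG q q' Hta.
case=> k1 [k2 [chi [chi' [y1 [y2 [Hc [E1 E2]]]]]]].
rewrite /q induced_general // in E1.
rewrite /q' induced_general // in E2.
have I1 := inv_ceqv 1 (tproj_inj E1).
have I2 := inv_ceqv (2^-1) (tproj_inj E2).
have a1 : inv0 1 (@mkRaw R (ptG R) (ptG R) Lp one one (swG idP) tt tt).
  rewrite /inv0 /=; exact: sw_id1.
have := (I1.1 a1); rewrite /inv0 /= => c1.
have : inv0 (2^-1) (@mkRaw R (ptG R) (ptG R) Lp k1 k2 chi' y1 y2).
  rewrite /inv0 /= Hc /= om_half; exact: c1.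
move/I2.2; rewrite /inv0 /= sw_om => e.
have : (3^-1 : R) = 1 by exact: e.
lra.
Qed.

End Msec.

Unset Implicit Arguments.
Local Close Scope classical_set_scope.

Theorem theorem4p9 (R : realType) :
  (forall (D E : GSpace R) (L : {posnum R}),
     exists B : TensG D E L -> TensG E D L,
       induced_by_swap B /\ homeo (@tens_top R D E L) (@tens_top R E D L) B)
  /\
  (exists D E : GSpace R,
     forall B : forall L : {posnum R}, TensG D E L -> TensG E D L,
       (forall L, induced_by_swap (B L)) -> ~ natural_swap B).
Proof.
split; [exact: part1 | exact: part2].
Qed.
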